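(* Let $n\ge 1$, let $\mu\in\mathbb{R}^n\setminus\{0\}$ and $\alpha\in\,]0,1/2[$. Let $\mathcal{D}=\mathbb{R}^n\setminus\{0,-\mu\}$ and define $\phi:\mathcal{D}\to\mathbb{R}^+$ by $$\phi(x)=Y(x)^\top Y(x),\qquad Y(x)=\|x\|^{-2\alpha}x-\|x+\mu\|^{-2\alpha}(x+\mu).$$ Then the global maximum of $\phi$ on $\mathcal{D}$ is attained at $x=-\mu/2$.
   Context: $\|\cdot\|$ denotes the Euclidean norm on $\mathbb{R}^n$. *)

(* Defs.v *)
From mathcomp Require Import all_boot all_order all_algebra.
From mathcomp Require Import reals exp.
Set Implicit Arguments. Unset Strict Implicit. Unset Printing Implicit Defensive.
Import Order.TTheory GRing.Theory Num.Theory.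
Local Open Scope ring_scope.

Definition dotv (R : realType) (n : nat) (u v : 'rV[R]_n) : R :=
  \sum_(i < n) u ord0 i * v ord0 i.

Definition enorm (R : realType) (n : nat) (x : 'rV[R]_n) : R :=
  Num.sqrt (dotv x x).

Definition Yf (R : realType) (n : nat) (alpha : R) (mu x : 'rV[R]_n) : 'rV[R]_n :=
  powR (enorm x) (- (2 * alpha)) *: x
  - powR (enorm (x + mu)) (- (2 * alpha)) *: (x + mu).

Definition phi (R : realType) (n : nat) (alpha : R) (mu x : 'rV[R]_n) : R :=
  dotv (Yf alpha mu x) (Yf alpha mu x).

(* Main.v *)
Require Import Defs.
From mathcomp Require Import all_boot all_order all_algebra.
From mathcomp Require Import reals exp ring lra.
Import Order.TTheory GRing.Theory Num.Theory.
Local Open Scope ring_scope.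

Section S.
Variable R : realType.
Implicit Types b x y : R.

Lemma tangent b x y : 0 < b -> b < 1 -> 0 < x -> 0 <= y ->
  y `^ b <= x `^ b + b * (x `^ b / x) * (y - x).
Proof.
move=> b0 b1 x0 y0.
have X0 : 0 < x `^ b by rewrite powR_gt0.
have b1' : 0 < 1 - b by rewrite subr_gt0.
have := @conjugate_powR R (y `^ b) (x `^ (1 - b)) b^-1 (1 - b)^-1
  (powR_ge0 _ _) (powR_ge0 _ _).
rewrite !invr_gt0 b0 b1' !invrK => /(_ isT isT).
have -> : b + (1 - b) = 1 by ring.
move=> /(_ erefl).
rewrite -!powRrM !mulfV ?gt_eqF //.
rewrite (powRr1 y0) (powRr1 (ltW x0)).
rewrite powRB; last by rewrite implybE gt_eqF ?orbT.
rewrite (powRr1 (ltW x0)) => H.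
have -> : y `^ b = (y `^ b * (x / x `^ b)) * (x `^ b / x).
  by field; rewrite !gt_eqF.
apply: le_trans (ler_wpM2r _ H) _; first by rewrite ltW // divr_gt0.
rewrite le_eqVlt; apply/orP; left; apply/eqP.
by field; rewrite gt_eqF.
Qed.

Lemma chord b n1 n n2 : 0 < b -> b < 1 -> 0 <= n1 -> n1 <= n -> n <= n2 -> 0 < n ->
  (n2 - n) * n1 `^ b + (n - n1) * n2 `^ b <= (n2 - n1) * n `^ b.
Proof.
move=> b0 b1 h1 h2 h3 h4.
have T1 := tangent b n n1 b0 b1 h4 h1.
have T2 := tangent b n n2 b0 b1 h4 (le_trans h1 (le_trans h2 h3)).
move: T1 T2; set D := b * (n `^ b / n); set H := n `^ b.
move=> T1 T2.
have e1 : 0 <= n2 - n by rewrite subr_ge0.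
have e2 : 0 <= n - n1 by rewrite subr_ge0.
have := ler_wpM2l e1 T1; have := ler_wpM2l e2 T2.
move=> U1 U2.
have -> : (n2 - n1) * H = (n2 - n) * (H + D * (n1 - n)) + (n - n1) * (H + D * (n2 - n)) by ring.
exact: lerD.
Qed.

Lemma pow_b0 b : 0 < b -> 0 `^ b = 0 :> R.
Proof. by move=> b0; rewrite powR0 // gt_eqF. Qed.

Lemma subadd b a c : 0 < b -> b < 1 -> 0 <= a -> 0 <= c ->
  (a + c) `^ b <= a `^ b + c `^ b.
Proof.
move=> b0 b1 a0 c0.
case: (eqVneq a 0) => [->|an0]; first by rewrite add0r pow_b0 // add0r.
case: (eqVneq c 0) => [->|cn0]; first by rewrite addr0 pow_b0 // addr0.
have ap : 0 < a by rewrite lt_neqAle eq_sym an0.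
have cp : 0 < c by rewrite lt_neqAle eq_sym cn0.
have s0 : 0 < a + c by rewrite addr_gt0.
have key : forall u, 0 < u -> u <= a + c -> u / (a + c) * (a + c) `^ b <= u `^ b.
  move=> u u0 ule.
  have -> : u `^ b = (u / (a + c)) `^ b * (a + c) `^ b.
    rewrite -powRM ?divr_ge0 ?ltW //; congr (_ `^ _); field; by rewrite gt_eqF.
  apply: ler_wpM2r; first exact: powR_ge0.
  apply: ger1_powR; last exact: ltW.
  by rewrite divr_gt0 //= ler_pdivrMr // mul1r.
have Ka := key a ap ltac:(by rewrite lerDl ltW).
have Kc := key c cp ltac:(by rewrite lerDr ltW).
have -> : (a + c) `^ b = a / (a + c) * (a + c) `^ b + c / (a + c) * (a + c) `^ b.
  by field; rewrite gt_eqF.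
exact: lerD.
Qed.

Lemma midpt b p q : 0 < b -> b < 1 -> 0 <= p -> 0 <= q ->
  p `^ b + q `^ b <= 2 * ((p + q) / 2) `^ b.
Proof.
move=> b0 b1 p0 q0.
case: (eqVneq (p + q) 0) => [pq0|pqn0].
  have p00 : p = 0 by lra.
  have q00 : q = 0 by lra.
  by rewrite p00 q00 addr0 mul0r pow_b0 // addr0 mulr0.
have s0 : 0 < (p + q) / 2.
  apply: divr_gt0 => //; rewrite lt_neqAle eq_sym pqn0 /=; exact: addr_ge0.
have T1 := tangent b ((p+q)/2) p b0 b1 s0 p0.
have T2 := tangent b ((p+q)/2) q b0 b1 s0 q0.
move: T1 T2; set D := b * _; set H := ((p + q) / 2) `^ b => T1 T2.
have -> : 2 * H = (H + D * (p - (p + q) / 2)) + (H + D * (q - (p + q) / 2)) by field.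
exact: lerD.
Qed.


Lemma diffb b p q : 0 < b -> b < 1 -> 0 <= p -> 0 <= q ->
  p `^ b - q `^ b <= 2 * (`|p - q| / 2) `^ b.
Proof.
move=> b0 b1 p0 q0.
case: (lerP q p) => qp; last first.
  have : p `^ b <= q `^ b by apply: ge0_ler_powR => //; [exact: ltW | exact: ltW].
  have := powR_ge0 ((q - p) / 2) b.
  lra.
set d := (p - q) / 2.
have d0 : 0 <= d by rewrite divr_ge0 // subr_ge0.
have hp : p = q + d + d by rewrite /d; field.
rewrite {1}hp.
have S1 := subadd b (q + d) d b0 b1 (addr_ge0 q0 d0) d0.
have S2 := subadd b q d b0 b1 q0 d0.
lra.
Qed.


Lemma sqpow b x : 0 <= x -> (x `^ b) ^+ 2 = (x ^+ 2) `^ b.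
Proof. by move=> x0; rewrite expr2 -powRM // expr2. Qed.

Lemma keyS b p q m : 0 < b -> b < 1 -> 0 < p -> 0 < q -> 0 < m ->
  (p - q) ^+ 2 <= m ^+ 2 -> m ^+ 2 <= (p + q) ^+ 2 ->
  (p `^ b) ^+ 2 + (q `^ b) ^+ 2 - p `^ b * q `^ b / (p * q) * (p ^+ 2 + q ^+ 2 - m ^+ 2)
  <= 4 * ((m / 2) `^ b) ^+ 2.
Proof.
move=> b0 b1 p0 q0 m0 l1 l2.
set X := p `^ b; set Y := q `^ b.
have X0 : 0 <= X := powR_ge0 _ _.
have Y0 : 0 <= Y := powR_ge0 _ _.
have E2 := midpt b p q b0 b1 (ltW p0) (ltW q0).
have E1a := diffb b p q b0 b1 (ltW p0) (ltW q0).
have E1b := diffb b q p b0 b1 (ltW q0) (ltW p0).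
rewrite distrC in E1b.
move: E1a E1b E2; rewrite -/X -/Y.
set G1 := (`|p - q| / 2) `^ b; set G2 := ((p + q) / 2) `^ b.
move=> E1a E1b E2.
have G10 : 0 <= G1 := powR_ge0 _ _.
have G20 : 0 <= G2 := powR_ge0 _ _.
have F1 : (X - Y) ^+ 2 <= 4 * G1 ^+ 2 by nra.
have F2 : (X + Y) ^+ 2 <= 4 * G2 ^+ 2 by nra.
have Ch := @chord b ((p - q) ^+ 2 / 4) (m ^+ 2 / 4) ((p + q) ^+ 2 / 4) b0 b1.
have : 0 <= (p - q) ^+ 2 / 4 by rewrite divr_ge0 // sqr_ge0.
move/Ch => {Ch}Ch.
have : (p - q) ^+ 2 / 4 <= m ^+ 2 / 4 by lra.
move/Ch => {Ch}Ch.
have : m ^+ 2 / 4 <= (p + q) ^+ 2 / 4 by lra.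
move/Ch => {Ch}Ch.
have : 0 < m ^+ 2 / 4 by rewrite divr_gt0 // exprn_gt0.
move/Ch => {Ch}Ch.
have e1 : ((p - q) ^+ 2 / 4) `^ b = G1 ^+ 2.
  rewrite /G1 sqpow ?divr_ge0 ?normr_ge0 //; congr (_ `^ _).
  by rewrite expr_div_n real_normK ?num_real //; congr (_ / _); rewrite expr2; lra.
have e2 : ((p + q) ^+ 2 / 4) `^ b = G2 ^+ 2.
  rewrite /G2 sqpow ?divr_ge0 ?addr_ge0 ?ltW //; congr (_ `^ _).
  by rewrite expr_div_n; congr (_ / _); rewrite expr2; lra.
have e3 : (m ^+ 2 / 4) `^ b = ((m / 2) `^ b) ^+ 2.
  rewrite sqpow ?divr_ge0 ?ltW //; congr (_ `^ _).
  by rewrite expr_div_n; congr (_ / _); rewrite expr2; lra.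
rewrite e1 e2 e3 in Ch.
move: Ch; set G := ((m / 2) `^ b) ^+ 2 => Ch.
have pq0 : 0 < p * q by rewrite mulr_gt0.
rewrite -(ler_pM2l pq0).
have -> : p * q * (X ^+ 2 + Y ^+ 2 - X * Y / (p * q) * (p ^+ 2 + q ^+ 2 - m ^+ 2))
  = ((p + q) ^+ 2 / 4 - m ^+ 2 / 4) * (X - Y) ^+ 2 + (m ^+ 2 / 4 - (p - q) ^+ 2 / 4) * (X + Y) ^+ 2.
  by field; rewrite !gt_eqF.
have -> : p * q * (4 * G) = 4 * (((p + q) ^+ 2 / 4 - (p - q) ^+ 2 / 4) * G) by field.
have w1 : 0 <= (p + q) ^+ 2 / 4 - m ^+ 2 / 4 by lra.
have w2 : 0 <= m ^+ 2 / 4 - (p - q) ^+ 2 / 4 by lra.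
have := ler_wpM2l w1 F1; have := ler_wpM2l w2 F2.
lra.
Qed.

End S.
Section V.
Variable R : realType.
Variable n : nat.
Implicit Types u v w : 'rV[R]_n.

Lemma dotv_exp (a c : R) u v :
  dotv (a *: u - c *: v) (a *: u - c *: v) =
  a ^+ 2 * dotv u u + c ^+ 2 * dotv v v - a * c * (2 * dotv u v).
Proof.
rewrite /dotv !mulr_sumr -big_split -sumrB /=.
by apply: eq_bigr => i _; rewrite !mxE; ring.
Qed.

Lemma dotv_pol u w :
  2 * dotv u (u + w) = dotv u u + dotv (u + w) (u + w) - dotv w w.
Proof.
rewrite /dotv !mulr_sumr -big_split -sumrB /=.
by apply: eq_bigr => i _; rewrite !mxE; ring.
Qed.

Lemma dotv_ge0 u : 0 <= dotv u u.
Proof. by rewrite /dotv sumr_ge0 // => i _; rewrite -expr2 sqr_ge0. Qed.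

Lemma dotv_gt0 u : u != 0 -> 0 < dotv u u.
Proof.
move=> un0; rewrite lt_neqAle dotv_ge0 andbT; apply/eqP => H.
move/eqP: un0; apply; apply/rowP => i; rewrite mxE.
have K : forall j : 'I_n, u ord0 j * u ord0 j = 0.
  move=> j; move: H; rewrite /dotv => /esym /psumr_eq0P; apply => //.
  by move=> k _; rewrite -expr2 sqr_ge0.
by move/eqP: (K i); rewrite mulf_eq0 orbb => /eqP.
Qed.

Lemma dotv0r u : dotv u 0 = 0.
Proof. rewrite /dotv big1 // => i _. have -> : (0 : 'rV[R]_n) ord0 i = 0 :> R by rewrite mxE. by rewrite mulr0. Qed.

Lemma cauchy u v : dotv u v ^+ 2 <= dotv u u * dotv v v.
Proof.
case: (eqVneq v 0) => [->|vn0].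
  by rewrite !dotv0r expr0n mulr0.
have Q0 := dotv_gt0 _ vn0.
have := dotv_ge0 (dotv v v *: u - dotv u v *: v).
rewrite dotv_exp.
nra.
Qed.

End V.

Lemma powconv (R : realType) (alpha t : R) : 0 < t ->
  t `^ (- (2 * alpha)) = t `^ (1 - 2 * alpha) / t.
Proof.
move=> t0; rewrite -[in LHS](_ : (1 - 2 * alpha) - 1 = - (2 * alpha)); last by ring.
rewrite powRB; last by rewrite (gt_eqF t0) implybT.
by rewrite (powRr1 (ltW t0)).
Qed.

Lemma dotvZ (R : realType) n (c : R) (u : 'rV[R]_n) :
  dotv (c *: u) (c *: u) = c ^+ 2 * dotv u u.
Proof.
rewrite /dotv mulr_sumr; apply: eq_bigr => i _; rewrite !mxE; ring.
Qed.

Theorem lemma5 (R : realType) (n : nat) (mu : 'rV[R]_n) (alpha : R) :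
  (1 <= n)%N -> mu != 0 -> 0 < alpha -> alpha < 1 / 2 ->
  let x0 := - ((1 / 2 : R) *: mu) in
  (x0 != 0 /\ x0 != - mu) /\
  forall x : 'rV[R]_n, x != 0 -> x != - mu ->
    phi alpha mu x <= phi alpha mu x0.
Proof.
move=> n1 mu0 a0 a1 x0.
have h0 : (1 / 2 : R) != 0 by rewrite mul1r invr_eq0 pnatr_eq0.
have ex0 : x0 = (- (1 / 2)) *: mu by rewrite /x0 scaleNr.
have ex0m : x0 + mu = (1 / 2) *: mu.
  rewrite ex0 -{2}(scale1r mu) -scalerDl; have -> : (- (1 / 2) + 1 : R) = 1 / 2 by field.
  done.
split.
  split.
    by rewrite ex0 scaler_eq0 negb_or mu0 andbT oppr_eq0 h0.
  apply/negP => /eqP H.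
  have : (1 / 2 : R) *: mu = 0 by rewrite -ex0m H addNr.
  by move/eqP; rewrite scaler_eq0 (negbTE mu0) (negbTE h0).
move=> x xn0 xmu.
set b := 1 - 2 * alpha.
have b0 : 0 < b by rewrite /b; lra.
have b1 : b < 1 by rewrite /b; lra.
have yn0 : x + mu != 0.
  apply/negP => /eqP H; move/eqP: xmu; apply.
  by rewrite -(addrK mu x) H sub0r.
have P0 := @dotv_gt0 _ _ _ xn0.
have Q0 := @dotv_gt0 _ _ _ yn0.
have M0 := @dotv_gt0 _ _ _ mu0.
have CS := @cauchy _ _ x (x + mu).
have pol := @dotv_pol _ _ x mu.
rewrite /phi /Yf !dotv_exp !dotv_pol.
have hx0 : dotv x0 x0 = (enorm mu / 2) ^+ 2.
  rewrite ex0 dotvZ /enorm [RHS]expr_div_n sqr_sqrtr ?dotv_ge0 //.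
  by field.
have hx0m : dotv (x0 + mu) (x0 + mu) = (enorm mu / 2) ^+ 2.
  rewrite ex0m dotvZ /enorm [RHS]expr_div_n sqr_sqrtr ?dotv_ge0 //.
  by field.
have m0 : 0 < enorm mu by rewrite /enorm sqrtr_gt0.
have m20 : 0 < enorm mu / 2 by rewrite divr_gt0.
have ex0n : enorm x0 = enorm mu / 2.
  by rewrite {1}/enorm hx0 sqrtr_sqr ger0_norm // ltW.
have ex0mn : enorm (x0 + mu) = enorm mu / 2.
  by rewrite {1}/enorm hx0m sqrtr_sqr ger0_norm // ltW.
rewrite hx0 hx0m ex0n ex0mn.
have p0 : 0 < enorm x by rewrite /enorm sqrtr_gt0.
have q0 : 0 < enorm (x + mu) by rewrite /enorm sqrtr_gt0.
rewrite !powconv //.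
have eP : dotv x x = enorm x ^+ 2 by rewrite /enorm sqr_sqrtr ?dotv_ge0.
have eQ : dotv (x + mu) (x + mu) = enorm (x + mu) ^+ 2 by rewrite /enorm sqr_sqrtr ?dotv_ge0.
have eM : dotv mu mu = enorm mu ^+ 2 by rewrite /enorm sqr_sqrtr ?dotv_ge0.
have eC : (dotv x (x + mu)) ^+ 2 <= (enorm x * enorm (x + mu)) ^+ 2 by rewrite exprMn -eP -eQ.
move: pol eC; rewrite eP eQ eM -/b.
set p := enorm x; set q := enorm (x + mu); set m := enorm mu; set c := dotv x (x + mu).
move=> pol eC.
have pq0 : 0 < p * q by rewrite mulr_gt0.
have cle : c <= p * q.
  rewrite leNgt; apply/negP => H.
  have H2 : 0 < c + p * q by lra.
  have H3 : 0 < c - p * q by lra.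
  have := mulr_gt0 H2 H3. nra.
have cge : - (p * q) <= c.
  rewrite leNgt; apply/negP => H.
  have H2 : 0 < p * q - c by lra.
  have H3 : 0 < - c - p * q by lra.
  have := mulr_gt0 H2 H3. nra.
have l1 : (p - q) ^+ 2 <= m ^+ 2 by nra.
have l2 : m ^+ 2 <= (p + q) ^+ 2 by nra.
have K := @keyS _ b p q m b0 b1 p0 q0 m0 l1 l2.
set X := p `^ b in K *; set Y := q `^ b in K *; set Z := (m / 2) `^ b in K *.
have -> : (X / p) ^+ 2 * p ^+ 2 + (Y / q) ^+ 2 * q ^+ 2 -
  X / p * (Y / q) * (p ^+ 2 + q ^+ 2 - m ^+ 2) =
  X ^+ 2 + Y ^+ 2 - X * Y / (p * q) * (p ^+ 2 + q ^+ 2 - m ^+ 2).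
  by field; rewrite !gt_eqF.
have -> : (Z / (m / 2)) ^+ 2 * (m / 2) ^+ 2 + (Z / (m / 2)) ^+ 2 * (m / 2) ^+ 2 -
  Z / (m / 2) * (Z / (m / 2)) * ((m / 2) ^+ 2 + (m / 2) ^+ 2 - m ^+ 2) = 4 * Z ^+ 2.
  by field; rewrite gt_eqF.
exact: K.
Qed.
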